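(* Let $K$ be a field, $V$ an infinite dimensional $K$-vector space with countable basis, $R:=\mathrm{End}_K(V)$, $\mathcal C:=\{\varphi\in R\mid\dim_K\mathrm{im}(\varphi)<\infty\}$ and $\mathcal F:=\{\varphi\in R\mid \dim_K\ker(\varphi)<\infty,\ \dim_K\mathrm{coker}(\varphi)<\infty\}$. Then: (1) $\mathrm{Ass}_l(R)=\mathrm{Ass}_r(R)=\mathrm{Ass}(R)=\{0,\mathcal C\}$; (2) $S_{l,0}(R)=S_{r,0}(R)=S_0(R)=\mathrm{Aut}_K(V)$ and $Q_l(R)=Q_r(R)=Q(R)=R$; (3) $S_{l,\mathcal C}(R)=S_{r,\mathcal C}(R)=S_{\mathcal C}(R)=\mathcal F$ and $Q_{l,\mathcal C}(R)=Q_{r,\mathcal C}(R)=Q_{\mathcal C}(R)=R/\mathcal C$; (4) $\mathrm{maxAss}_l(R)=\mathrm{maxAss}_r(R)=\mathrm{maxAss}(R)=\{\mathcal C\}$; (5) $R/\mathcal C$ is a localization maximal ring and a left (resp. right; left and right) localization maximal ring.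
   Context: Rings are associative with $1$. A multiplicatively closed subset $S$ ($1\in S$, $0\notin S$) is a left Ore set if $Sr\cap Rs\ne\emptyset$ for all $r,s$ ($s\in S$); a left denominator set if moreover $rs=0$ ($s\in S$) implies $tr=0$ for some $t\in S$; right Ore/right denominator sets are defined symmetrically; a denominator set is one that is both a left and a right denominator set. For a left (resp. right) denominator set $S$, $\mathrm{ass}_l(S)=\{r\mid sr=0\text{ some }s\in S\}$ (resp. $\mathrm{ass}_r(S)=\{r\mid rs=0\text{ some }s\in S\}$); for a denominator set these coincide, $\mathrm{ass}(S)$. $\mathrm{Ass}_l(R)$, $\mathrm{Ass}_r(R)$, $\mathrm{Ass}(R)$ are the sets of ideals $\mathrm{ass}$ of left denominator sets, right denominator sets, denominator sets respectively, and $\mathrm{maxAss}_l,\mathrm{maxAss}_r,\mathrm{maxAss}$ their sets of maximal elements under inclusion. For an ideal $\mathfrak a$ in the relevant set, $S_{l,\mathfrak a}(R)$ (resp. $S_{r,\mathfrak a}(R)$, $S_{\mathfrak a}(R)$) is the largest left denominator set (resp. right denominator set, denominator set) $S$ with $\mathrm{ass}(S)=\mathfrak a$ (they exist), and $Q_{l,\mathfrak a}(R)=S_{l,\mathfrak a}(R)^{-1}R$, $Q_{r,\mathfrak a}(R)=RS_{r,\mathfrak a}(R)^{-1}$, $Q_{\mathfrak a}(R)=S_{\mathfrak a}(R)^{-1}R$; for $\mathfrak a=0$ write $S_{l,0},Q_l$, $S_{r,0},Q_r$, $S_0,Q$. A ring $A$ is left (resp. right) localization maximal if $Q_l(A)=A$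 and $\mathrm{Ass}_l(A)=\{0\}$ (resp. $Q_r(A)=A$, $\mathrm{Ass}_r(A)=\{0\}$); left and right localization maximal if both hold; localization maximal if $Q(A)=A$ and $\mathrm{Ass}(A)=\{0\}$. *)

(* Defs.v *)
From HB Require Import structures.
From mathcomp Require Import all_boot all_algebra.
From mathcomp Require Import boolp classical_sets.

Set Implicit Arguments.
Unset Strict Implicit.
Unset Printing Implicit Defensive.
Import GRing.Theory.
Local Open Scope ring_scope.
Local Open Scope classical_set_scope.

Section Localization.
Variable R : pzRingType.

Definition mult_closed (S : set R) : Prop :=
  S 1 /\ ~ S 0 /\ (forall s t, S s -> S t -> S (s * t)).

Definition left_ore (S : set R) : Prop :=
  mult_closed S /\
  forall r s, S s -> exists s', exists r', S s' /\ s' * r = r' * s.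

Definition right_ore (S : set R) : Prop :=
  mult_closed S /\
  forall r s, S s -> exists s', exists r', S s' /\ r * s' = s * r'.

Definition left_denom (S : set R) : Prop :=
  left_ore S /\
  forall r s, S s -> r * s = 0 -> exists t, S t /\ t * r = 0.

Definition right_denom (S : set R) : Prop :=
  right_ore S /\
  forall r s, S s -> s * r = 0 -> exists t, S t /\ r * t = 0.

Definition denom (S : set R) : Prop := left_denom S /\ right_denom S.

Definition ass_l (S : set R) : set R := [set r | exists s, S s /\ s * r = 0].
Definition ass_r (S : set R) : set R := [set r | exists s, S s /\ r * s = 0].
(* for a denominator set, ass(S) := ass_l(S) (= ass_r(S)) *)
Definition ass (S : set R) : set R := ass_l S.

Definition Ass_l : set (set R) := [set a | exists S, left_denom S /\ ass_l S = a].
Definition Ass_r : set (set R) := [set a | exists S, right_denom S /\ ass_r S = a].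
Definition Ass : set (set R) := [set a | exists S, denom S /\ ass S = a].

Definition maximal_elements (X : set (set R)) : set (set R) :=
  [set a | X a /\ forall b, X b -> a `<=` b -> b = a].

Definition maxAss_l := maximal_elements Ass_l.
Definition maxAss_r := maximal_elements Ass_r.
Definition maxAss := maximal_elements Ass.

Definition is_S_l (a : set R) (S : set R) : Prop :=
  left_denom S /\ ass_l S = a /\
  (forall S', left_denom S' -> ass_l S' = a -> S' `<=` S).
Definition is_S_r (a : set R) (S : set R) : Prop :=
  right_denom S /\ ass_r S = a /\
  (forall S', right_denom S' -> ass_r S' = a -> S' `<=` S).
Definition is_S (a : set R) (S : set R) : Prop :=
  denom S /\ ass S = a /\
  (forall S', denom S' -> ass S' = a -> S' `<=` S).

(* Rings of fractions (Ore localizations), defined as usual by their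
   characterizing properties: sigma : R -> Q is a ring homomorphism such that
   the images of S are units, ker sigma = ass(S), and every element of Q has
   the form sigma(s)^-1 sigma(r) (left) resp. sigma(r) sigma(s)^-1 (right). *)
Definition is_unit_in (Q : pzRingType) (x : Q) : Prop :=
  exists y, y * x = 1 /\ x * y = 1.

Definition is_left_loc (Q : pzRingType) (S : set R) (sigma : {rmorphism R -> Q}) : Prop :=
  (forall s, S s -> is_unit_in (sigma s)) /\
  [set r | sigma r = 0] = ass_l S /\
  (forall q : Q, exists s, exists r, S s /\ sigma s * q = sigma r).

Definition is_right_loc (Q : pzRingType) (S : set R) (sigma : {rmorphism R -> Q}) : Prop :=
  (forall s, S s -> is_unit_in (sigma s)) /\
  [set r | sigma r = 0] = ass_r S /\
  (forall q : Q, exists s, exists r, S s /\ q * sigma s = sigma r).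

(* sigma : R -> Q realizes Q_{l,a}(R) = S_{l,a}(R)^{-1} R, etc. *)
Definition is_Q_l (a : set R) (Q : pzRingType) (sigma : {rmorphism R -> Q}) : Prop :=
  forall S, is_S_l a S -> is_left_loc S sigma.
Definition is_Q_r (a : set R) (Q : pzRingType) (sigma : {rmorphism R -> Q}) : Prop :=
  forall S, is_S_r a S -> is_right_loc S sigma.
(* for a denominator set S, S^{-1}R = R S^{-1}; both descriptions required *)
Definition is_Q (a : set R) (Q : pzRingType) (sigma : {rmorphism R -> Q}) : Prop :=
  forall S, is_S a S -> is_left_loc S sigma /\ is_right_loc S sigma.

End Localization.

Definition id_rmorph (A : pzRingType) : {rmorphism A -> A} := idfun.

Definition left_loc_maximal (A : pzRingType) : Prop :=
  is_Q_l [set 0] (id_rmorph A) /\ @Ass_l A = [set [set (0 : A)]].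
Definition right_loc_maximal (A : pzRingType) : Prop :=
  is_Q_r [set 0] (id_rmorph A) /\ @Ass_r A = [set [set (0 : A)]].
Definition loc_maximal (A : pzRingType) : Prop :=
  is_Q [set 0] (id_rmorph A) /\ @Ass A = [set [set (0 : A)]].

Section Endo.
Variables (K : fieldType) (V : lmodType K).

Record endo := Endo {
  efun :> V -> V;
  elin : forall (a : K) (u v : V), efun (a *: u + v) = a *: efun u + efun v }.

Lemma endo_ext (f g : endo) : (forall v, f v = g v) -> f = g.
Proof.
case: f g => f fl [g gl] /= fg.
have e : f = g by apply: funext.
subst g; congr Endo; exact: Prop_irrelevance.
Qed.

HB.instance Definition _ := gen_eqMixin endo.
HB.instance Definition _ := gen_choiceMixin endo.

Program Definition endo0 : endo := @Endo (fun _ => 0) _.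
Next Obligation. by rewrite scaler0 addr0. Qed.
Program Definition endo_opp (f : endo) : endo := @Endo (fun v => - f v) _.
Next Obligation. by rewrite elin opprD scalerN. Qed.
Program Definition endo_add (f g : endo) : endo := @Endo (fun v => f v + g v) _.
Next Obligation. by rewrite !elin scalerDr addrACA. Qed.
Program Definition endo1 : endo := @Endo (fun v => v) _.
Program Definition endo_mul (f g : endo) : endo := @Endo (fun v => f (g v)) _.
Next Obligation. by rewrite !elin. Qed.

Lemma endo_addA : associative endo_add.
Proof. by move=> f g h; apply: endo_ext => v /=; rewrite addrA. Qed.
Lemma endo_addC : commutative endo_add.
Proof. by move=> f g; apply: endo_ext => v /=; rewrite addrC. Qed.
Lemma endo_add0 : left_id endo0 endo_add.
Proof. by move=> f; apply: endo_ext => v /=; rewrite add0r. Qed.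
Lemma endo_addN : left_inverse endo0 endo_opp endo_add.
Proof. by move=> f; apply: endo_ext => v /=; rewrite addNr. Qed.

HB.instance Definition _ := GRing.isZmodule.Build endo
  endo_addA endo_addC endo_add0 endo_addN.

Lemma endo_mulA : associative endo_mul.
Proof. by move=> f g h; apply: endo_ext. Qed.
Lemma endo_mul1 : left_id endo1 endo_mul.
Proof. by move=> f; apply: endo_ext. Qed.
Lemma endo_mulr1 : right_id endo1 endo_mul.
Proof. by move=> f; apply: endo_ext. Qed.
Lemma endo_mulDl : left_distributive endo_mul (@GRing.add endo).
Proof. by move=> f g h; apply: endo_ext. Qed.
Lemma endo_mulDr : right_distributive endo_mul (@GRing.add endo).
Proof.
move=> f g h; apply: endo_ext => v /=.
by have := elin f 1 (g v) (h v); rewrite !scale1r.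
Qed.

HB.instance Definition _ := GRing.Zmodule_isPzRing.Build endo
  endo_mulA endo_mul1 endo_mulr1 endo_mulDl endo_mulDr.

End Endo.

Section LinAlg.
Variables (K : fieldType) (V : lmodType K).

Definition is_nat_basis (e : nat -> V) : Prop :=
  (forall (n : nat) (c : 'I_n -> K),
      \sum_(i < n) c i *: e i = 0 -> forall i, c i = 0) /\
  (forall v : V, exists n : nat, exists c : 'I_n -> K, v = \sum_(i < n) c i *: e i).

Definition span_fin (n : nat) (w : 'I_n -> V) : set V :=
  [set v | exists c : 'I_n -> K, v = \sum_(i < n) c i *: w i].

Definition fin_dim (U : set V) : Prop :=
  exists n : nat, exists w : 'I_n -> V, (forall i, U (w i)) /\ U `<=` span_fin w.

Definition im (f : endo V) : set V := [set v | exists u, v = f u].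
Definition ker (f : endo V) : set V := [set v | f v = 0].

(* dim coker f = dim V / im f < oo : finitely many vectors span V modulo im f *)
Definition fin_dim_coker (f : endo V) : Prop :=
  exists n : nat, exists w : 'I_n -> V,
    forall v : V, exists c : 'I_n -> K, im f (v - \sum_(i < n) c i *: w i).

End LinAlg.

Definition finrank (K : fieldType) (V : lmodType K) : set (endo V) :=
  [set f | fin_dim (im f)].

Definition fredholm (K : fieldType) (V : lmodType K) : set (endo V) :=
  [set f | fin_dim (ker f) /\ fin_dim_coker f].

Definition aut (K : fieldType) (V : lmodType K) : set (endo V) :=
  [set f | bijective f].

(* Main.v *)
Require Import Defs.
From HB Require Import structures.
From mathcomp Require Import all_boot all_algebra.
From mathcomp Require Import boolp classical_sets.
From mathcomp Require Import zify.
Set Implicit Arguments.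
Unset Strict Implicit.
Unset Printing Implicit Defensive.
Import GRing.Theory.
Local Open Scope ring_scope.
Local Open Scope classical_set_scope.
Section LA.
Variables (K : fieldType) (V : lmodType K).
Local Notation R := (endo V).

Lemma mulE (f g : R) v : (f * g) v = f (g v). Proof. by []. Qed.
Lemma addE (f g : R) v : (f + g) v = f v + g v. Proof. by []. Qed.
Lemma oppE (f : R) v : (- f) v = - f v. Proof. by []. Qed.
Lemma oneE v : (1 : R) v = v. Proof. by []. Qed.
Lemma zeroE v : (0 : R) v = 0. Proof. by []. Qed.
Lemma subE (f g : R) v : (f - g) v = f v - g v. Proof. by []. Qed.

Lemma sumE I (r : seq I) (P : pred I) (F : I -> R) v :
  (\sum_(i <- r | P i) F i) v = \sum_(i <- r | P i) F i v.
Proof.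
elim: r => [|x r IH]; first by rewrite !big_nil.
by rewrite !big_cons; case: (P x); rewrite ?addE IH.
Qed.

Lemma lin0 (f : R) : f 0 = 0.
Proof.
have := elin f 1 0 0; rewrite !scale1r addr0 => H.
by apply: (addrI (f 0)); rewrite addr0 -H.
Qed.
Lemma linD (f : R) u v : f (u + v) = f u + f v.
Proof. by have := elin f 1 u v; rewrite !scale1r. Qed.
Lemma linZ (f : R) a u : f (a *: u) = a *: f u.
Proof. by have := elin f a u 0; rewrite !addr0 lin0 addr0. Qed.
Lemma linN (f : R) u : f (- u) = - f u.
Proof. by rewrite -scaleN1r linZ scaleN1r. Qed.
Lemma linB (f : R) u v : f (u - v) = f u - f v.
Proof. by rewrite linD linN. Qed.
Lemma linsum (f : R) n (F : 'I_n -> V) : f (\sum_(i < n) F i) = \sum_(i < n) f (F i).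
Proof. by elim/big_rec2: _ => [|i x y _ <-]; rewrite ?lin0 ?linD. Qed.

Lemma rel_endo (Q : V -> V -> Prop) :
  (forall v, exists x, Q v x) -> (forall v x y, Q v x -> Q v y -> x = y) ->
  (forall a u v x y, Q u x -> Q v y -> Q (a *: u + v) (a *: x + y)) ->
  exists f : R, forall v, Q v (f v).
Proof.
move=> ex un lin; have [g Hg] := choice ex.
have gl : forall a u v, g (a *: u + v) = a *: g u + g v.
  by move=> a u v; apply: (un (a *: u + v)); [apply: Hg | apply: lin].
by exists (Endo gl).
Qed.

Definition subsp (W : set V) := W 0 /\ forall a u v, W u -> W v -> W (a *: u + v).

Lemma subspD W u v : subsp W -> W u -> W v -> W (u + v).
Proof. by move=> [_ H] ??; rewrite -[u]scale1r; apply: H. Qed.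
Lemma subspZ W a u : subsp W -> W u -> W (a *: u).
Proof. by move=> [H0 H] ?; rewrite -[_ *: _]addr0; apply: H. Qed.
Lemma subspN W u : subsp W -> W u -> W (- u).
Proof. by move=> ??; rewrite -scaleN1r; apply: subspZ. Qed.
Lemma subspB W u v : subsp W -> W u -> W v -> W (u - v).
Proof. by move=> ???; apply: subspD => //; apply: subspN. Qed.
Lemma subsp_sum W n (F : 'I_n -> V) : subsp W -> (forall i, W (F i)) -> W (\sum_(i < n) F i).
Proof.
move=> sW HF; elim/big_rec: _ => [|i x _ Hx]; first by case: sW.
exact: subspD.
Qed.

Lemma subsp_ker (f : R) : subsp (ker f).
Proof. by split; rewrite /ker /= ?lin0 // => a u v Hu Hv; rewrite elin Hu Hv scaler0 addr0. Qed.
Lemma subsp_im (f : R) : subsp (im f).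
Proof.
split; first by exists 0; rewrite lin0.
by move=> a _ _ [u ->] [v ->]; exists (a *: u + v); rewrite elin.
Qed.

Variable e : nat -> V.
Hypothesis he : is_nat_basis e.

Definition lc (a : nat -> K) N : V := \sum_(i < N) a i *: e i.

Lemma lc_widen a N M : (N <= M)%N -> (forall i, (N <= i)%N -> a i = 0) -> lc a M = lc a N.
Proof.
move=> NM Ha; rewrite /lc -(subnKC NM) big_split_ord /=.
rewrite [X in _ + X]big1 ?addr0 // => i _; by rewrite Ha ?scale0r // leq_addr.
Qed.

Lemma lc_eq a N M : (forall i, (minn N M <= i)%N -> a i = 0) -> lc a M = lc a N.
Proof.
move=> Ha; case: (leqP N M) => NM.
  by apply: lc_widen => // i Hi; apply: Ha; rewrite (minn_idPl NM).
apply/esym; apply: lc_widen; first exact: ltnW.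
by move=> i Hi; apply: Ha; rewrite (minn_idPr (ltnW NM)).
Qed.

Lemma lcZD k a b N : lc (fun i => k * a i + b i) N = k *: lc a N + lc b N.
Proof.
rewrite /lc scaler_sumr -big_split /=; apply: eq_bigr => i _.
by rewrite scalerDl scalerA.
Qed.

Lemma lc0 N : lc (fun _ => 0) N = 0.
Proof. by rewrite /lc big1 // => i _; rewrite scale0r. Qed.

Lemma lc_indep a N : lc a N = 0 -> forall i, (i < N)%N -> a i = 0.
Proof.
move=> H i Hi; have := he.1 N (fun j : 'I_N => a j) H (Ordinal Hi); done.
Qed.

Lemma lc_ext a b N : (forall i, (i < N)%N -> a i = b i) -> lc a N = lc b N.
Proof. by move=> H; apply: eq_bigr => i _; rewrite H. Qed.

Lemma coord_ex v : exists a : nat -> K, exists N, (forall i, (N <= i)%N -> a i = 0) /\ v = lc a N.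
Proof.
have [n [c ->]] := he.2 v.
exists (fun i => if @insub _ (fun k => (k < n)%N) 'I_n i is Some j then c j else 0); exists n.
split.
  by move=> i Hi; rewrite insubN // -leqNgt.
by apply: eq_bigr => i _; rewrite valK.
Qed.

Definition coord (v : V) : nat -> K := proj1_sig (cid (coord_ex v)).

Lemma coordP v : exists N, (forall i, (N <= i)%N -> coord v i = 0) /\ v = lc (coord v) N.
Proof. exact: (proj2_sig (cid (coord_ex v))). Qed.

Lemma coord_lc a N : (forall i, (N <= i)%N -> a i = 0) -> forall i, coord (lc a N) i = a i.
Proof.
move=> Ha i; have [M [HM HMe]] := coordP (lc a N).
set P := maxn N M.
have E1 : lc a P = lc a N by apply: lc_widen; rewrite ?leq_maxl.
have E2 : lc (coord (lc a N)) P = lc (coord (lc a N)) M by apply: lc_widen; rewrite ?leq_maxr.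
have : lc (fun j => 1 * a j + (- coord (lc a N) j)) P = 0.
  rewrite (lc_ext (b := fun j => (-1) * coord (lc a N) j + a j)); last first.
    by move=> j _; rewrite mul1r mulN1r addrC.
  by rewrite lcZD scaleN1r E2 -HMe E1 addNr.
move/lc_indep => H0; case: (ltnP i P) => Hi.
  by have := H0 i Hi; rewrite mul1r => /eqP; rewrite subr_eq0 => /eqP.
rewrite Ha ?HM //; [exact: leq_trans (leq_maxr _ _) Hi | exact: leq_trans (leq_maxl _ _) Hi].
Qed.

Lemma coord_lc_gen a N i : coord (lc a N) i = if (i < N)%N then a i else 0.
Proof.
rewrite (lc_ext (b := fun j => if (j < N)%N then a j else 0)); last by move=> j ->.
by rewrite coord_lc // => j; rewrite ltnNge => ->.
Qed.

Lemma coordZD k u v i : coord (k *: u + v) i = k * coord u i + coord v i.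
Proof.
have [Nu [Hu Eu]] := coordP u; have [Nv [Hv Ev]] := coordP v.
set P := maxn Nu Nv.
have Eu' : u = lc (coord u) P by rewrite {1}Eu; apply/esym/lc_widen => //; rewrite leq_maxl.
have Ev' : v = lc (coord v) P by rewrite {1}Ev; apply/esym/lc_widen => //; rewrite leq_maxr.
rewrite [in LHS]Eu' [in LHS]Ev' -lcZD coord_lc // => j Hj.
rewrite Hu ?Hv ?mulr0 ?addr0 //; [exact: leq_trans (leq_maxr _ _) Hj | exact: leq_trans (leq_maxl _ _) Hj].
Qed.

Lemma coordD u v i : coord (u + v) i = coord u i + coord v i.
Proof. by rewrite -[u]scale1r coordZD mul1r scale1r. Qed.
Lemma coord0 i : coord 0 i = 0.
Proof. by rewrite -(lc0 0) coord_lc_gen. Qed.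
Lemma coordZ k u i : coord (k *: u) i = k * coord u i.
Proof. by rewrite -[k *: u]addr0 coordZD coord0 addr0. Qed.
Lemma coordN u i : coord (- u) i = - coord u i.
Proof. by rewrite -scaleN1r coordZ mulN1r. Qed.
Lemma coordB u v i : coord (u - v) i = coord u i - coord v i.
Proof. by rewrite coordD coordN. Qed.

Definition E N : set V := [set v | forall i, (N <= i)%N -> coord v i = 0].

Lemma E_lc v N : E N v -> v = lc (coord v) N.
Proof.
move=> Hv; have [M [HM HMe]] := coordP v; rewrite {1}HMe; apply/esym.
apply: lc_eq => i Hi; case: (leqP N M) => NM; [apply: Hv | apply: HM]; lia.
Qed.

Lemma lc_E a N : E N (lc a N).
Proof. by move=> i Hi; rewrite coord_lc_gen ltnNge Hi. Qed.

Lemma E_ex v : exists N, E N v.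
Proof. by have [N [HN _]] := coordP v; exists N. Qed.

Lemma subsp_E N : subsp (E N).
Proof.
split; first by move=> i _; rewrite coord0.
by move=> a u v Hu Hv i Hi; rewrite coordZD Hu ?Hv ?mulr0 ?addr0.
Qed.

Lemma E_mono N M : (N <= M)%N -> E N `<=` E M.
Proof. by move=> NM v Hv i Hi; apply: Hv; exact: leq_trans Hi. Qed.

Lemma E0 v : E 0 v -> v = 0.
Proof. by move/E_lc ->; rewrite /lc big_ord0. Qed.

Lemma e_lc i : e i = lc (fun j => (j == i)%:R) i.+1.
Proof.
rewrite /lc big_ord_recr /= eqxx scale1r big1 ?add0r // => j _.
by rewrite (ltn_eqF (ltn_ord j)) scale0r.
Qed.

Lemma coord_e i j : coord (e i) j = (j == i)%:R.
Proof.
rewrite e_lc coord_lc_gen; case: ltnP => // H.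
by rewrite eqn_leq [(j <= i)%N]leqNgt H.
Qed.

Lemma e_neq0 i : e i != 0.
Proof. by apply/eqP => H; have := coord_e i i; rewrite H coord0 eqxx => /eqP; rewrite eq_sym oner_eq0. Qed.

Lemma E_e i N : E N (e i) -> (i < N)%N.
Proof. by move=> H; rewrite ltnNge; apply/negP => /H; rewrite coord_e eqxx => /eqP; rewrite oner_eq0. Qed.

Lemma not_fd_V N : ~ (setT `<=` E N).
Proof. by move=> H; have := E_e (H (e N) I); rewrite ltnn. Qed.

Lemma E_split N v : E N.+1 v -> E N (v - coord v N *: e N).
Proof.
move=> Hv i Hi; rewrite coordB coordZ coord_e.
case: (ltngtP i N) => H; first by rewrite ltnNge Hi in H.
  by rewrite Hv // mulr0 subr0.
by rewrite H mulr1 subrr.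
Qed.

Lemma E_D N u v : E N u -> E N v -> E N (u + v).
Proof. by move=> Hu Hv i Hi; rewrite coordD Hu ?Hv ?addr0. Qed.
Lemma E_Z N a u : E N u -> E N (a *: u).
Proof. by move=> Hu i Hi; rewrite coordZ Hu ?mulr0. Qed.
Lemma E_N N u : E N u -> E N (- u).
Proof. by move=> Hu i Hi; rewrite coordN Hu ?oppr0. Qed.
Lemma E_B N u v : E N u -> E N v -> E N (u - v).
Proof. by move=> Hu Hv; apply: E_D => //; apply: E_N. Qed.
Lemma E_0 N : E N 0.
Proof. by move=> i _; rewrite coord0. Qed.
Lemma E_sum N n (F : 'I_n -> V) : (forall i, E N (F i)) -> E N (\sum_(i < n) F i).
Proof. by move=> HF; elim/big_rec: _ => [|i x _ Hx]; [exact: E_0 | exact: E_D]. Qed.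

Lemma image_bounded (f : R) N : exists M, forall v, E N v -> E M (f v).
Proof.
elim: N => [|N [M HM]].
  by exists 0%N => v /E0 ->; rewrite lin0; apply: E_0.
have [M' HM'] := E_ex (f (e N)); exists (maxn M M') => v Hv.
have -> : v = (v - coord v N *: e N) + coord v N *: e N by rewrite subrK.
rewrite linD linZ; apply: E_D.
  apply: (E_mono (leq_maxl M M')); exact: HM _ (E_split Hv).
by apply: E_Z; apply: (E_mono (leq_maxr M M')); exact: HM'.
Qed.

Lemma subspI (U W : set V) : subsp U -> subsp W -> subsp (U `&` W).
Proof.
move=> [U0 HU] [W0 HW]; split; first by split.
by move=> a u v [? ?] [? ?]; split; [apply: HU | apply: HW].
Qed.

Lemma fin_dim_fd U : fin_dim U -> exists N, U `<=` E N.
Proof.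
move=> [n [w [Hw Hsp]]]; have [b Hb] := choice (fun i : 'I_n => E_ex (w i)).
exists (\max_(i < n) b i) => u /Hsp [c ->]; apply: E_sum.
move=> i; apply: E_Z.
by apply: (E_mono (leq_bigmax i)); apply: Hb.
Qed.

Lemma fd_fin_dim N U : subsp U -> U `<=` E N -> fin_dim U.
Proof.
elim: N U => [|N IH] U sU HU.
  exists 0%N, (fun _ => 0); split; first by case.
  by move=> u /HU /E0 ->; exists (fun _ => 0); rewrite big_ord0.
have [[u [Hu Hc]]|nex] := pselect (exists u, U u /\ coord u N != 0); last first.
  apply: (IH U sU) => v Hv i Hi; case: (ltngtP N i) => H.
  - exact: HU.
  - by rewrite ltnNge Hi in H.
  - rewrite -H; apply/eqP; apply: contrapT => Hn; apply: nex; exists v; split => //.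
    exact/negP.
have sU' : subsp (U `&` E N) by apply: subspI => //; exact: subsp_E.
have [n [w [Hw Hsp]]] := IH _ sU' (fun x Hx => Hx.2).
pose w' := fun i : 'I_n.+1 => if unlift ord_max i is Some j then w j else u.
have wl : forall i : 'I_n, widen_ord (leqnSn n) i = lift ord_max i.
  by move=> i; apply: val_inj; rewrite /= /bump leqNgt ltn_ord.
exists n.+1, w'; split.
  by move=> i; rewrite /w'; case: (unlift ord_max i) => [j|] //; case: (Hw j).
move=> x Hx; pose k := coord x N / coord u N.
have Hy : (U `&` E N) (x - k *: u).
  split; first by apply: subspB => //; apply: subspZ.
  move=> i Hi; rewrite coordB coordZ; case: (ltngtP N i) => H.
  - by rewrite (HU _ Hx) // (HU _ Hu) // mulr0 subr0.
  - by rewrite ltnNge Hi in H.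
  - by rewrite -H /k mulfVK // subrr.
have [c Hc'] := Hsp _ Hy.
exists (fun i : 'I_n.+1 => if unlift ord_max i is Some j then c j else k).
rewrite big_ord_recr /= /w' unlift_none.
under eq_bigr => i _ do rewrite wl liftK.
by rewrite -Hc' subrK.
Qed.

Definition fd (U : set V) := exists N, U `<=` E N.

Lemma fd_fin_dimE U : subsp U -> fin_dim U <-> fd U.
Proof.
move=> sU; split; first exact: fin_dim_fd.
by move=> [N HN]; exact: fd_fin_dim HN.
Qed.

Section Compl.
Variable W : set V.
Hypothesis sW : subsp W.

Let P n := ~ (exists w, W w /\ E n (e n - w)).
Let U := [set u | forall i, ~ P i -> coord u i = 0].

Let sU : subsp U.
Proof.
split; first by move=> i _; rewrite coord0.
by move=> a x y Hx Hy i Hi; rewrite coordZD Hx ?Hy ?mulr0 ?addr0.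
Qed.

Let decomp N v : E N v -> exists w u, W w /\ U u /\ v = w + u.
Proof.
elim: N v => [|N IH] v.
  by move/E0 ->; exists 0, 0; split; [case: sW | split; [case: sU|rewrite addr0]].
move=> Hv; pose c := coord v N; have Hv' := E_split Hv.
have Ev : v = (v - c *: e N) + c *: e N by rewrite subrK.
have [[w0 [Hw0 He]]|nP] := pselect (exists w, W w /\ E N (e N - w)).
  have H1 : E N ((v - c *: e N) + c *: (e N - w0)).
    by apply: E_D => //; apply: E_Z.
  have [w [u [Hw [Hu Hwu]]]] := IH _ H1.
  exists (w + c *: w0), u; split; first by apply: subspD => //; apply: subspZ.
  split => //.
  have -> : v = ((v - c *: e N) + c *: (e N - w0)) + c *: w0.
    by rewrite scalerBr addrA subrK subrK.
  by rewrite Hwu addrAC.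
have [w [u [Hw [Hu Hwu]]]] := IH _ Hv'.
exists w, (u + c *: e N); split => //; split.
  move=> i Hi; rewrite coordD coordZ coord_e Hu //.
  case: (eqVneq i N) => [HiN|HiN]; last by rewrite mulr0 addr0.
  by rewrite HiN in Hi.
by rewrite addrA -Hwu subrK.
Qed.

Let direct N x : E N x -> W x -> U x -> x = 0.
Proof.
elim: N x => [|N IH] x; first by move=> /E0.
move=> Hx Wx Ux; have [c0|cn0] := eqVneq (coord x N) 0.
  apply: IH => // i Hi; case: (ltngtP N i) => H.
  - exact: Hx.
  - by rewrite ltnNge Hi in H.
  - by rewrite -H.
have PN : P N by move=> nP; move: cn0; rewrite Ux ?eqxx.
exfalso; apply: PN; exists ((coord x N)^-1 *: x); split; first exact: subspZ.
move=> i Hi; rewrite coordB coordZ coord_e; case: (ltngtP N i) => H.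
- by rewrite (Hx i H) mulr0 subr0.
- lia.
- by rewrite -H mulVf // subrr.
Qed.

Lemma complement_ex : exists U : set V, exists p : R,
  subsp U /\ (forall v, U (p v) /\ W (v - p v)) /\ (forall x, U x -> W x -> x = 0).
Proof.
have dir : forall x, U x -> W x -> x = 0.
  by move=> x Ux Wx; have [N HN] := E_ex x; exact: direct HN Wx Ux.
have [p Hp] : exists p : R, forall v, U (p v) /\ W (v - p v).
  apply: (@rel_endo (fun v x => U x /\ W (v - x))).
  - move=> v; have [N HN] := E_ex v; have [w [u [Hw [Hu Hv]]]] := decomp HN.
    by exists u; split => //; rewrite Hv addrK.
  - move=> v x y [Ux Wx] [Uy Wy]; apply/eqP; rewrite -subr_eq0; apply/eqP.
    apply: dir; first exact: (subspB sU Ux Uy).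
    have -> : x - y = (v - y) - (v - x) by rewrite opprB [RHS]addrC addrA subrK.
    exact: (subspB sW Wy Wx).
  - move=> a u v x y [Ux Wu] [Uy Wv]; split; first exact: (sU.2 a x y Ux Uy).
    have -> : a *: u + v - (a *: x + y) = a *: (u - x) + (v - y).
      by rewrite scalerBr opprD addrACA.
    exact: (sW.2 a _ _ Wu Wv).
by exists U, p.
Qed.
End Compl.

Lemma complement W : subsp W -> exists U : set V, exists p : R,
  subsp U /\ (forall v, U (p v) /\ W (v - p v)) /\ (forall x, U x -> W x -> x = 0)
  /\ (forall u, U u -> p u = u) /\ (forall w, W w -> p w = 0)
  /\ (forall v, p v = 0 -> W v).
Proof.
move=> sW; have [U [p [sU [Hp dir]]]] := complement_ex sW.
exists U, p; do 3 (split => //).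
have pU : forall u, U u -> p u = u.
  move=> u Uu; have [Upu Wu] := Hp u; apply/eqP; rewrite -subr_eq0; apply/eqP.
  apply: dir; first exact: subspB.
  by rewrite -opprB; apply: subspN.
split => //; split.
  move=> w Ww; have [Upw Ww'] := Hp w; apply: dir => //.
  have -> : p w = w - (w - p w) by rewrite opprB addrC subrK.
  exact: subspB.
by move=> v Hv; have [_] := Hp v; rewrite Hv subr0.
Qed.

Definition bnd (f : R) := exists N, forall v, E N (f v).
Definition cofd (f : R) := exists N, forall v, exists u, E N (v - f u).

Lemma finrankE (f : R) : finrank f <-> bnd f.
Proof.
rewrite /finrank /=; rewrite (fd_fin_dimE (subsp_im f)); split.
  by move=> [N HN]; exists N => v; apply: HN; exists v.
by move=> [N HN]; exists N => _ [u ->].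
Qed.

Lemma fin_dim_cokerE (f : R) : fin_dim_coker f <-> cofd f.
Proof.
split.
  move=> [n [w Hw]]; have [b Hb] := choice (fun i : 'I_n => E_ex (w i)).
  exists (\max_(i < n) b i) => v; have [c [u Hu]] := Hw v; exists u.
  have -> : v - f u = \sum_(i < n) c i *: w i by rewrite -Hu opprB addrC subrK.
  apply: E_sum => i; apply: E_Z; apply: (E_mono (leq_bigmax i)); exact: Hb.
move=> [N HN]; exists N, (fun i : 'I_N => e i) => v.
have [u Hu] := HN v; exists (fun i : 'I_N => coord (v - f u) i); exists u.
by rewrite -/(lc (coord (v - f u)) N) -(E_lc Hu) opprB addrC subrK.
Qed.

Lemma fredholmE (f : R) : fredholm f <-> fd (ker f) /\ cofd f.
Proof.
rewrite /fredholm /= (fd_fin_dimE (subsp_ker f)) fin_dim_cokerE; done.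
Qed.

Lemma bnd0 : bnd 0. Proof. by exists 0%N => v; rewrite zeroE; apply: E_0. Qed.
Lemma bndD x y : bnd x -> bnd y -> bnd (x + y).
Proof.
move=> [N HN] [M HM]; exists (maxn N M) => v; rewrite addE; apply: E_D.
  by apply: (E_mono (leq_maxl N M)).
by apply: (E_mono (leq_maxr N M)).
Qed.
Lemma bndN x : bnd x -> bnd (- x).
Proof. by move=> [N HN]; exists N => v; rewrite oppE; apply: E_N. Qed.
Lemma bndB x y : bnd x -> bnd y -> bnd (x - y).
Proof. by move=> ??; apply: bndD => //; apply: bndN. Qed.
Lemma bndMl a x : bnd x -> bnd (a * x).
Proof.
move=> [N HN]; have [M HM] := image_bounded a N; exists M => v; rewrite mulE; exact: HM.
Qed.
Lemma bndMr x a : bnd x -> bnd (x * a).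
Proof. by move=> [N HN]; exists N => v; rewrite mulE. Qed.

Lemma not_bnd1 : ~ bnd 1.
Proof. by move=> [N HN]; apply: (@not_fd_V N) => v _; exact: HN v. Qed.

Lemma proj_onto W : subsp W -> exists q : R, (forall v, W (q v)) /\ (forall w, W w -> q w = w).
Proof.
move=> sW; have [U [p [sU [Hp [dir [pU [pW pK]]]]]]] := complement sW.
exists (1 - p); split; first by move=> v; rewrite subE oneE; case: (Hp v).
by move=> w Ww; rewrite subE oneE pW // subr0.
Qed.

Lemma proj_onto_cofin W : subsp W -> (exists N, forall v, exists w, W w /\ E N (v - w)) ->
  exists q : R, fd (ker q) /\ cofd q /\ (forall v, W (q v)).
Proof.
move=> sW [N HN]; have [U [p [sU [Hp [dir [pU [pW pK]]]]]]] := complement sW.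
have [M HM] := image_bounded p N.
have UM : U `<=` E M.
  move=> u Uu; have [w [Ww Hw]] := HN u.
  have -> : u = p (u - w) by rewrite linB pU // pW // subr0.
  exact: HM.
exists (1 - p); split; last split.
- exists M => v; rewrite /ker /= => /eqP; rewrite subr_eq0 => /eqP ->.
  by apply: UM; case: (Hp v).
- exists M => v; exists v; rewrite subE oneE opprB addrC subrK.
  by apply: UM; case: (Hp v).
- by move=> v; rewrite subE oneE; case: (Hp v).
Qed.

Lemma proj_along_fd W : subsp W -> fd W ->
  exists t : R, fd (ker t) /\ cofd t /\ (forall w, W w -> t w = 0).
Proof.
move=> sW [N HN]; have [U [p [sU [Hp [dir [pU [pW pK]]]]]]] := complement sW.
exists p; split; last split => //.
- by exists N => v /pK; apply: HN.
- by exists N => v; exists v; apply: HN; case: (Hp v).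
Qed.

Lemma T3 r : bnd r -> exists t : R, (fd (ker t) /\ cofd t) /\ t * r = 0.
Proof.
move=> Hr; have sW := subsp_im r.
have fW : fd (im r) by move: Hr => [N HN]; exists N => _ [u ->].
have [t [kt [ct Ht]]] := proj_along_fd sW fW.
by exists t; split => //; apply: endo_ext => v; rewrite mulE zeroE Ht //; exists v.
Qed.

Lemma T4 r : bnd r -> exists t : R, (fd (ker t) /\ cofd t) /\ r * t = 0.
Proof.
move=> /finrankE [n [w [Hw Hsp]]].
have [x Hx] := choice (fun i : 'I_n => Hw i).
have [b Hb] := choice (fun i : 'I_n => E_ex (x i)).
set M := \max_(i < n) b i.
have cof : exists N, forall v, exists w, ker r w /\ E N (v - w).
  exists M => v; have [c Hc] := Hsp (r v) (ex_intro _ v erefl).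
  exists (v - \sum_(i < n) c i *: x i); split.
    rewrite /ker /= linB linsum; apply/eqP; rewrite subr_eq0 Hc; apply/eqP.
    by apply: eq_bigr => i _; rewrite linZ -Hx.
  rewrite opprB addrC subrK; apply: E_sum => i; apply: E_Z.
  by apply: (E_mono (leq_bigmax i)); exact: Hb.
have [q [kq [cq Hq]]] := proj_onto_cofin (subsp_ker r) cof.
by exists q; split => //; apply: endo_ext => v; rewrite mulE zeroE; apply: Hq.
Qed.

Lemma cofd_compl (s : R) U (p : R) : cofd s -> (forall u, U u -> p u = u) ->
  (forall v, p (s v) = 0) -> exists M, U `<=` E M.
Proof.
move=> [N HN] pU pW; have [M HM] := image_bounded p N; exists M => u Uu.
have [x Hx] := HN u.
have -> : u = p (u - s x) by rewrite linB pU // pW subr0.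
exact: HM.
Qed.

Lemma parametrix (s : R) : fd (ker s) -> cofd s ->
  exists g : R, bnd (1 - s * g) /\ bnd (1 - g * s).
Proof.
move=> [N kN] cs.
have [U1 [p1 [sU1 [Hp1 [dir1 [pU1 [pW1 pK1]]]]]]] := complement (subsp_ker s).
have [U2 [p2 [sU2 [Hp2 [dir2 [pU2 [pW2 pK2]]]]]]] := complement (subsp_im s).
have sp1 : forall y, s (p1 y) = s y.
  move=> y; have [_ Hk] := Hp1 y; move: Hk; rewrite /ker /= linB => /eqP.
  by rewrite subr_eq0 => /eqP <-.
have uniq1 : forall x y, U1 x -> U1 y -> s x = s y -> x = y.
  move=> x y Ux Uy Hs; apply/eqP; rewrite -subr_eq0; apply/eqP; apply: dir1.
    exact: (subspB sU1 Ux Uy).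
  by rewrite /ker /= linB Hs subrr.
have [g Hg] : exists g : R, forall v, U1 (g v) /\ s (g v) = v - p2 v.
  apply: (@rel_endo (fun v x => U1 x /\ s x = v - p2 v)).
  - move=> v; have [_ [y Hy]] := Hp2 v; exists (p1 y); split; first by case: (Hp1 y).
    by rewrite sp1 Hy.
  - by move=> v x y [Ux Hx] [Uy Hy]; apply: uniq1 => //; rewrite Hx Hy.
  - move=> a u v x y [Ux Hx] [Uy Hy]; split; first exact: (sU1.2 a x y Ux Uy).
    by rewrite elin Hx Hy elin scalerBr addrACA opprD.
have pW2s : forall v, p2 (s v) = 0 by move=> v; apply: pW2; exists v.
have [M UM] := cofd_compl cs pU2 pW2s.
exists g; split.
  exists M => v; rewrite subE oneE mulE; have [_ ->] := Hg v.
  rewrite opprB addrC subrK; apply: UM; by case: (Hp2 v).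
exists N => v; rewrite subE oneE mulE.
have -> : g (s v) = p1 v.
  apply: uniq1; [by case: (Hg (s v)) | by case: (Hp1 v) |].
  by have [_ ->] := Hg (s v); rewrite pW2s subr0 sp1.
by apply: kN; case: (Hp1 v).
Qed.

Lemma An1 (s : R) : ~ fd (ker s) -> exists r : R, ~ bnd r /\ s * r = 0.
Proof.
move=> nk; have [q [Hq qW]] := proj_onto (subsp_ker s).
exists q; split; last by apply: endo_ext => v; rewrite mulE zeroE; apply: Hq.
move=> [N HN]; apply: nk; exists N => w Hw; rewrite -(qW _ Hw); exact: HN.
Qed.

Lemma An2 (s : R) : ~ cofd s -> exists r : R, ~ bnd r /\ r * s = 0.
Proof.
move=> nc; have [U2 [p2 [sU2 [Hp2 [dir2 [pU2 [pW2 pK2]]]]]]] := complement (subsp_im s).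
exists p2; split; last by apply: endo_ext => v; rewrite mulE zeroE; apply: pW2; exists v.
move=> [N HN]; apply: nc; exists N => v; have [_ [u Hu]] := Hp2 v; exists u.
by rewrite -Hu opprB addrC subrK.
Qed.

Lemma An3 (s : R) v : v != 0 -> s v = 0 -> exists r : R, r != 0 /\ s * r = 0.
Proof.
move=> vn0 sv; have [q [Hq qW]] := proj_onto (subsp_ker s).
exists q; split; last by apply: endo_ext => x; rewrite mulE zeroE; apply: Hq.
by apply/eqP => q0; move: (qW v sv); rewrite q0 zeroE => /esym /eqP; rewrite (negbTE vn0).
Qed.

Lemma An4 (s : R) v : ~ im s v -> exists r : R, r != 0 /\ r * s = 0.
Proof.
move=> nv; have [U2 [p2 [sU2 [Hp2 [dir2 [pU2 [pW2 pK2]]]]]]] := complement (subsp_im s).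
exists p2; split; last by apply: endo_ext => x; rewrite mulE zeroE; apply: pW2; exists x.
by apply/eqP => p0; apply: nv; apply: pK2; rewrite p0.
Qed.

Lemma fred_of (s : R) : (forall r, s * r = 0 -> bnd r) -> (forall r, r * s = 0 -> bnd r) ->
  fd (ker s) /\ cofd s.
Proof.
move=> H1 H2; split.
  apply: contrapT => nk; have [r [nr sr]] := An1 nk; exact: nr (H1 _ sr).
apply: contrapT => nk; have [r [nr sr]] := An2 nk; exact: nr (H2 _ sr).
Qed.

Lemma bij_of (s : R) : (forall r, s * r = 0 -> r = 0) -> (forall r, r * s = 0 -> r = 0) ->
  exists g : R, s * g = 1 /\ g * s = 1.
Proof.
move=> H1 H2.
have inj : forall x y, s x = s y -> x = y.
  move=> x y Hxy; apply/eqP; rewrite -subr_eq0; apply/eqP; apply: contrapT => Hn.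
  have e0 : s (x - y) = 0 by rewrite linB Hxy subrr.
  have [r [rn0 sr]] := An3 (introN eqP Hn) e0.
  by move: rn0; rewrite (H1 _ sr) eqxx.
have sur : forall v, im s v.
  move=> v; apply: contrapT => nv; have [r [rn0 rs]] := An4 nv.
  by move: rn0; rewrite (H2 _ rs) eqxx.
have [g Hg] : exists g : R, forall v, s (g v) = v.
  apply: (@rel_endo (fun v x => s x = v)).
  - by move=> v; have [u ->] := sur v; exists u.
  - by move=> v x y Hx Hy; apply: inj; rewrite Hx Hy.
  - by move=> a u v x y Hx Hy; rewrite elin Hx Hy.
exists g; split; apply: endo_ext => v; rewrite mulE oneE //.
by apply: inj; rewrite Hg.
Qed.

Definition lcu (u : nat -> V) (a : nat -> K) N : V := \sum_(i < N) a i *: u i.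

Lemma lcu_widen u a N M : (N <= M)%N -> (forall i, (N <= i)%N -> a i = 0) -> lcu u a M = lcu u a N.
Proof.
move=> NM Ha; rewrite /lcu -(subnKC NM) big_split_ord /=.
rewrite [X in _ + X]big1 ?addr0 // => i _; by rewrite Ha ?scale0r // leq_addr.
Qed.

Lemma fd_span n (g : nat -> V) : exists M, forall c : 'I_n -> K, E M (\sum_(i < n) c i *: g i).
Proof.
have [b Hb] := choice (fun i : nat => E_ex (g i)).
exists (\max_(i < n) b i) => c; apply: E_sum => i; apply: E_Z.
by apply: (E_mono (leq_bigmax i)); exact: Hb.
Qed.

Fixpoint seqF (pk : nat -> (nat -> V) -> V) (n : nat) : nat -> V :=
  match n with
  | 0 => fun _ => 0
  | n'.+1 => fun i => if (i < n')%N then seqF pk n' i else pk n' (seqF pk n')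
  end.

Lemma seqF_stable pk m i : (i < m)%N -> seqF pk m i = seqF pk i.+1 i.
Proof.
elim: m => [//|m IH] Hi /=; case: ltnP => H; first by rewrite IH // /= ltnn.
have -> : i = m by apply/eqP; rewrite eqn_leq H -ltnS Hi.
by rewrite ltnn.
Qed.

Lemma infinite_rank (f : R) : ~ bnd f -> exists a b : R, a * f * b = 1.
Proof.
move=> nb.
have [U1 [p1 [sU1 [Hp1 [dir1 [pU1 [pW1 pK1]]]]]]] := complement (subsp_ker f).
have fp1 : forall v, f (p1 v) = f v.
  move=> y; have [_ Hk] := Hp1 y; move: Hk; rewrite /ker /= linB => /eqP.
  by rewrite subr_eq0 => /eqP <-.
have nU1 : forall M, ~ (U1 `<=` E M).
  move=> M HM; apply: nb; have [M' HM'] := image_bounded f M; exists M' => v.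
  rewrite -fp1; apply: HM'; apply: HM; by case: (Hp1 v).
have pick : forall (n : nat) (g : nat -> V),
    exists x, U1 x /\ ~ (exists c : 'I_n -> K, x = \sum_(i < n) c i *: g i).
  move=> n g; apply: contrapT => H; have [M HM] := fd_span n g; apply: (nU1 M) => x Ux.
  have : exists c : 'I_n -> K, x = \sum_(i < n) c i *: g i.
    by apply: contrapT => Hc; apply: H; exists x.
  by move=> [c ->]; exact: HM.
have pick2 : forall n, exists F : (nat -> V) -> V, forall g,
    U1 (F g) /\ ~ (exists c : 'I_n -> K, F g = \sum_(i < n) c i *: g i).
  by move=> n; have [F HF] := choice (pick n); exists F.
have [pk Hpk] := choice pick2.
pose u i := seqF pk i.+1 i.
have Hu : forall n, U1 (u n) /\ ~ (exists c : 'I_n -> K, u n = \sum_(i < n) c i *: u i).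
  move=> n; rewrite /u /= ltnn; have [H1 H2] := Hpk n (seqF pk n); split => //.
  move=> [c Hc]; apply: H2; exists c; rewrite Hc; apply: eq_bigr => i _.
  by rewrite (seqF_stable pk (ltn_ord i)) /= ltnn.
have indep : forall n (c : 'I_n -> K), \sum_(i < n) c i *: u i = 0 -> forall i, c i = 0.
  elim=> [|n IH] c; first by move=> _ [].
  rewrite big_ord_recr /= => H0.
  have cm : c ord_max = 0.
    apply: contrapT => cn; apply: (Hu n).2.
    exists (fun i => - (c (widen_ord (leqnSn n) i) / c ord_max)).
    have cn' : c ord_max != 0 by exact/eqP.
    have Hcm : c ord_max *: u n = - \sum_(i < n) c (widen_ord (leqnSn n) i) *: u i.
      by apply/eqP; rewrite -addr_eq0 addrC H0.
    rewrite -[u n]scale1r -(mulVf cn') -scalerA Hcm scalerN scaler_sumr -sumrN.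
    by apply: eq_bigr => i _; rewrite scalerA scaleNr [_^-1 * _]mulrC.
  rewrite cm scale0r addr0 in H0; have H' := IH _ H0.
  move=> i; case: (unliftP ord_max i) => [j ->|->] //.
  by rewrite -(H' j); congr c; apply: val_inj; exact: lift_max.
have [b Hb] : exists b : R, forall v, exists N, E N v /\ b v = lcu u (coord v) N.
  apply: (@rel_endo (fun v x => exists N, E N v /\ x = lcu u (coord v) N)).
  - by move=> v; have [N HN] := E_ex v; exists (lcu u (coord v) N); exists N.
  - move=> v x y [N [HN ->]] [M [HM ->]].
    rewrite -(@lcu_widen u (coord v) N (maxn N M)) ?leq_maxl //.
    by rewrite -(@lcu_widen u (coord v) M (maxn N M)) ?leq_maxr.
  - move=> a v w x y [N [HN ->]] [M [HM ->]]; exists (maxn N M); split.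
      apply: E_D; first apply: E_Z.
        exact: (E_mono (leq_maxl N M)).
      exact: (E_mono (leq_maxr N M)).
    rewrite -(@lcu_widen u (coord v) N (maxn N M)) ?leq_maxl //.
    rewrite -(@lcu_widen u (coord w) M (maxn N M)) ?leq_maxr //.
    rewrite /lcu scaler_sumr -big_split /=; apply: eq_bigr => i _.
    by rewrite coordZD scalerDl scalerA.
have bU : forall v, U1 (b v).
  move=> v; have [N [_ ->]] := Hb v; apply: subsp_sum => // i.
  exact: subspZ sU1 (Hu i).1.
have hinj : forall v, f (b v) = 0 -> v = 0.
  move=> v Hv; have b0 : b v = 0 by apply: dir1.
  have [N [HN Hbv]] := Hb v; rewrite Hbv in b0.
  have c0 := indep N (fun i => coord v i) b0.
  by rewrite (E_lc HN) /lc big1 // => i _; rewrite c0 scale0r.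
pose h := f * b.
have [U3 [p3 [sU3 [Hp3 [dir3 [pU3 [pW3 pK3]]]]]]] := complement (subsp_im h).
have hinj' : forall x y, h x = h y -> x = y.
  move=> x y Hxy; apply/eqP; rewrite -subr_eq0; apply/eqP; apply: hinj.
  by rewrite -mulE linB Hxy subrr.
have [a Ha] : exists a : R, forall v, h (a v) = v - p3 v.
  apply: (@rel_endo (fun v x => h x = v - p3 v)).
  - by move=> v; have [_ [y Hy]] := Hp3 v; exists y.
  - by move=> v x y Hx Hy; apply: hinj'; rewrite Hx Hy.
  - by move=> a0 u0 v x y Hx Hy; rewrite elin Hx Hy elin scalerBr addrACA opprD.
exists a, b; apply: endo_ext => v; rewrite !mulE oneE.
apply: hinj'; rewrite Ha pW3 ?subr0 //; by exists v.
Qed.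

Definition isIdeal (I : set R) := I 0 /\ (forall x y, I x -> I y -> I (x + y)) /\
  (forall a x, I x -> I (a * x)) /\ (forall x a, I x -> I (x * a)).

Lemma rank1 (phi : V -> K) y : (forall a u v, phi (a *: u + v) = a * phi u + phi v) ->
  exists r : R, forall v, r v = phi v *: y.
Proof.
move=> Hphi.
have lin : forall a u v, (fun v => phi v *: y) (a *: u + v) = a *: (fun v => phi v *: y) u + (fun v => phi v *: y) v.
  by move=> a u v /=; rewrite Hphi scalerDl scalerA.
by exists (Endo lin).
Qed.

Lemma ideal_C I : isIdeal I -> forall x, I x -> x != 0 -> forall g, bnd g -> I g.
Proof.
move=> [I0 [ID [IMl IMr]]] x Ix xn0 g [N HN].
have [v0 Hv0] : exists v0, x v0 != 0.
  apply: contrapT => H; move/eqP: xn0; apply; apply: endo_ext => v; rewrite zeroE.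
  by apply: contrapT => Hv; apply: H; exists v; exact/eqP.
set u0 := x v0.
have [k Hk] : exists k, coord u0 k != 0.
  apply: contrapT => H; move/eqP: Hv0; apply; have [M [_ HM]] := coordP u0.
  rewrite -/u0 HM /lc big1 // => i _; have -> : coord u0 i = 0.
    by apply: contrapT => Hi; apply: H; exists i; exact/eqP.
  by rewrite scale0r.
have HB0 : forall i, exists r : R, forall v, r v = coord (g v) i *: v0.
  by move=> i; apply: rank1 => a u v; rewrite elin coordZD.
have [B HB] := choice HB0.
have HA0 : forall i, exists r : R, forall z, r z = (coord z k / coord u0 k) *: e i.
  by move=> i; apply: rank1 => a u v; rewrite coordZD mulrDl mulrA.
have [A HA] := choice HA0.
have -> : g = \sum_(i < N) A i * x * B i.
  apply: endo_ext => v; rewrite sumE (E_lc (HN v)); apply: eq_bigr => i _.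
  by rewrite !mulE HB linZ HA coordZ mulfK.
elim/big_rec: _ => [|i y _ Hy]; first by [].
by apply: ID => //; apply: IMr; apply: IMl.
Qed.

Lemma ideal_classif I : isIdeal I -> ~ I 1 -> I = [set 0] \/ I = @finrank K V.
Proof.
move=> HI n1; have [I0 [ID [IMl IMr]]] := HI.
have [[x [Ix xn0]]|nex] := pselect (exists x, I x /\ x != 0).
  right; apply/funext => y; apply/propext; rewrite finrankE; split.
    move=> Iy; apply: contrapT => nb; have [a [b Hab]] := infinite_rank nb.
    by apply: n1; rewrite -Hab; apply: IMr; apply: IMl.
  exact: ideal_C Ix xn0 y.
left; apply/funext => y; apply/propext; split.
  move=> Iy; apply/eqP; apply: contrapT => Hy; apply: nex; exists y; split => //; exact/negP.
by move=> ->.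
Qed.

Lemma bnd_neq0 : exists g : R, bnd g /\ g != 0.
Proof.
have [r Hr] := @rank1 (fun v => coord v 0) (e 0) (fun a u v => coordZD a u v 0).
exists r; split.
  exists 1%N => v; rewrite Hr; apply: E_Z => i Hi; rewrite coord_e.
  by case: i Hi.
apply/eqP => r0; have := Hr (e 0); rewrite r0 zeroE coord_e eqxx scale1r => /esym /eqP.
by rewrite (negbTE (e_neq0 0)).
Qed.

Definition Fp (s : R) := fd (ker s) /\ cofd s.

Lemma Fp1 : Fp 1.
Proof.
split; first by exists 0%N => v; rewrite /ker /= => ->; apply: E_0.
by exists 0%N => v; exists v; rewrite oneE subrr; apply: E_0.
Qed.

Lemma Fp0 : ~ Fp 0.
Proof. by move=> [[N HN] _]; apply: (@not_fd_V N) => v _; by apply: HN. Qed.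

Lemma T1 s r : Fp s -> s * r = 0 -> bnd r.
Proof.
move=> [ks cs] sr; have [g [_ Hg]] := parametrix ks cs.
have -> : r = (1 - g * s) * r + g * (s * r) by rewrite mulrBl mul1r mulrA subrK.
by rewrite sr mulr0 addr0; apply: bndMr.
Qed.

Lemma T2 s r : Fp s -> r * s = 0 -> bnd r.
Proof.
move=> [ks cs] rs; have [g [Hg _]] := parametrix ks cs.
have -> : r = r * (1 - s * g) + (r * s) * g by rewrite mulrBr mulr1 mulrA subrK.
by rewrite rs mul0r addr0; apply: bndMl.
Qed.

Lemma FpM s t : Fp s -> Fp t -> Fp (s * t).
Proof.
move=> Fs Ft; have [ks cs] := Fs; have [kt ct] := Ft.
have [gs [Hs1 Hs2]] := parametrix ks cs; have [gt [Ht1 Ht2]] := parametrix kt ct.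
apply: fred_of => r H.
  have b1 : bnd (t * r) by apply: (T1 Fs); rewrite mulrA.
  have -> : r = (1 - gt * t) * r + gt * (t * r) by rewrite mulrBl mul1r mulrA subrK.
  by apply: bndD; [apply: bndMr | apply: bndMl].
have b1 : bnd (r * s) by apply: (T2 Ft); rewrite -mulrA.
have -> : r = r * (1 - s * gs) + (r * s) * gs by rewrite mulrBr mulr1 mulrA subrK.
by apply: bndD; [apply: bndMl | apply: bndMr].
Qed.

Lemma ore_l s r : Fp s -> exists s' r', Fp s' /\ s' * r = r' * s.
Proof.
move=> [ks cs]; have [g [_ Hg]] := parametrix ks cs.
have [t [Ft Ht]] := T3 (bndMl r Hg).
exists t, (t * r * g); split => //.
have -> : t * r * g * s = t * r - t * (r * (1 - g * s)).
  by rewrite mulrBr mulr1 mulrBr opprB addrC subrK !mulrA.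
by rewrite Ht subr0.
Qed.

Lemma ore_r s r : Fp s -> exists s' r', Fp s' /\ r * s' = s * r'.
Proof.
move=> [ks cs]; have [g [Hg _]] := parametrix ks cs.
have [t [Ft Ht]] := T4 (bndMr r Hg).
exists t, (g * r * t); split => //.
have -> : s * (g * r * t) = r * t - (1 - s * g) * r * t.
  by rewrite mulrBl mul1r mulrBl opprB addrC subrK !mulrA.
by rewrite Ht subr0.
Qed.

Lemma Fp_fred s : fredholm s <-> Fp s.
Proof. exact: fredholmE. Qed.

End LA.

Section Gen.
Variable R0 : pzRingType.

Definition gIdeal (I : set R0) := I 0 /\ (forall x y, I x -> I y -> I (x + y)) /\
  (forall a x, I x -> I (a * x)) /\ (forall x a, I x -> I (x * a)).

Lemma seteqE (A B : set R0) : (forall x, A x <-> B x) -> A = B.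
Proof. by move=> H; apply/funext => x; apply/propext; exact: H. Qed.

Lemma assl_ideal (S : set R0) : left_denom S -> gIdeal (ass_l S) /\ ~ ass_l S 1.
Proof.
move=> [[[S1 [S0 SM]] Ore] Den]; split; last by move=> [s [Ss]]; rewrite mulr1 => s0; apply: S0; rewrite -s0.
split; first by exists 1; rewrite mulr0.
split.
  move=> x y [s1 [Ss1 Hx]] [s2 [Ss2 Hy]]; have [s' [r' [Ss' Hsr]]] := Ore s1 s2 Ss2.
  exists (s' * s1); split; first exact: SM.
  by rewrite mulrDr -mulrA Hx mulr0 add0r Hsr -mulrA Hy mulr0.
split.
  move=> a x [s [Ss Hx]]; have [s' [r' [Ss' Hsr]]] := Ore a s Ss.
  by exists s'; split => //; rewrite mulrA Hsr -mulrA Hx mulr0.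
by move=> x a [s [Ss Hx]]; exists s; split => //; rewrite mulrA Hx mul0r.
Qed.

Lemma assr_ideal (S : set R0) : right_denom S -> gIdeal (ass_r S) /\ ~ ass_r S 1.
Proof.
move=> [[[S1 [S0 SM]] Ore] Den]; split; last by move=> [s [Ss]]; rewrite mul1r => s0; apply: S0; rewrite -s0.
split; first by exists 1; rewrite mul0r.
split.
  move=> x y [s1 [Ss1 Hx]] [s2 [Ss2 Hy]]; have [s' [r' [Ss' Hsr]]] := Ore s1 s2 Ss2.
  exists (s1 * s'); split; first exact: SM.
  by rewrite mulrDl mulrA Hx mul0r add0r Hsr mulrA Hy mul0r.
split; first by move=> a x [s [Ss Hx]]; exists s; split => //; rewrite -mulrA Hx mulr0.
move=> x a [s [Ss Hx]]; have [s' [r' [Ss' Hsr]]] := Ore a s Ss.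
by exists s'; split => //; rewrite -mulrA Hsr mulrA Hx mul0r.
Qed.

Lemma ass_lr (S : set R0) : denom S -> ass_r S = ass_l S.
Proof.
move=> [[_ Dl] [_ Dr]]; apply: seteqE => x; split.
  by move=> [s [Ss Hx]]; have [t [St Ht]] := Dl x s Ss Hx; exists t.
by move=> [s [Ss Hx]]; have [t [St Ht]] := Dr x s Ss Hx; exists t.
Qed.

Lemma one_denom : (1 : R0) != 0 ->
  denom [set (1 : R0)] /\ ass_l [set (1 : R0)] = [set 0] /\ ass_r [set (1 : R0)] = [set 0].
Proof.
move=> n10.
have mc : mult_closed [set (1 : R0)].
  split => //; split; first by move=> /esym /eqP; rewrite (negbTE n10).
  by move=> s t -> ->; rewrite mulr1.
split; last split.
- split; split.
  + by split => // r s ->; exists 1, r; rewrite mulr1 mul1r.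
  + by move=> r s -> H; exists 1; split => //; rewrite mul1r; rewrite mulr1 in H.
  + by split => // r s ->; exists 1, r; rewrite mulr1 mul1r.
  + by move=> r s -> H; exists 1; split => //; rewrite mulr1; rewrite mul1r in H.
- apply: seteqE => x; split; first by move=> [s [-> H]]; rewrite mul1r in H.
  by move=> ->; exists 1; split => //; rewrite mulr0.
- apply: seteqE => x; split; first by move=> [s [-> H]]; rewrite mulr1 in H.
  by move=> ->; exists 1; split => //; rewrite mul0r.
Qed.

Definition unitsS : set R0 := [set u | exists g, u * g = 1 /\ g * u = 1].

Lemma units_denom : (1 : R0) != 0 ->
  denom unitsS /\ ass_l unitsS = [set 0] /\ ass_r unitsS = [set 0].
Proof.
move=> n10.
have mc : mult_closed unitsS.
  split; first by exists 1; rewrite mulr1.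
  split; first by move=> [g [H _]]; move: n10; rewrite -H mul0r eqxx.
  move=> s t [g [H1 H2]] [h [H3 H4]]; exists (h * g); split.
    by rewrite -mulrA (mulrA t) H3 mul1r.
  by rewrite -mulrA (mulrA g) H2 mul1r.
split; last split.
- split; split.
  + split => // r s [g [H1 H2]]; exists 1, (r * g); split; first by exists 1; rewrite mulr1.
    by rewrite mul1r -mulrA H2 mulr1.
  + move=> r s [g [H1 H2]] H; exists 1; split; first by exists 1; rewrite mulr1.
    by rewrite mul1r -[r]mulr1 -H1 mulrA H mul0r.
  + split => // r s [g [H1 H2]]; exists 1, (g * r); split; first by exists 1; rewrite mulr1.
    by rewrite mulr1 mulrA H1 mul1r.
  + move=> r s [g [H1 H2]] H; exists 1; split; first by exists 1; rewrite mulr1.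
    by rewrite mulr1 -[r]mul1r -H2 -mulrA H mulr0.
- apply: seteqE => x; split; last by move=> ->; exists 1; split; [exists 1; rewrite mulr1|rewrite mulr0].
  by move=> [s [[g [H1 H2]] H]]; rewrite /= -[x]mul1r -H2 -mulrA H mulr0.
- apply: seteqE => x; split; last by move=> ->; exists 1; split; [exists 1; rewrite mulr1|rewrite mul0r].
  by move=> [s [[g [H1 H2]] H]]; rewrite /= -[x]mulr1 -H1 mulrA H mul0r.
Qed.

End Gen.

Section Main.
Variables (K : fieldType) (V : lmodType K) (e : nat -> V).
Hypothesis he : is_nat_basis e.
Local Notation R := (endo V).
Local Notation C := (@finrank K V).
Local Notation F := (@fredholm K V).
Local Notation A := (@aut K V).

Lemma CE r : C r <-> bnd he r. Proof. exact: finrankE. Qed.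
Lemma FE s : F s <-> Fp he s. Proof. exact: fredholmE. Qed.

Lemma one_neq0 : (1 : R) != 0.
Proof. by apply/eqP => H; apply: (@not_bnd1 _ _ _ he); rewrite H; apply: bnd0. Qed.

Lemma C_neq0 : C <> [set 0].
Proof.
move=> H; have [g [bg gn0]] := bnd_neq0 he.
have : C g by apply/CE.
by rewrite H => g0; move: gn0; rewrite g0 eqxx.
Qed.

Lemma zero_subC : [set (0 : R)] `<=` C.
Proof. by move=> x ->; apply/CE; apply: bnd0. Qed.

Lemma F_mc : mult_closed F.
Proof.
split; first exact/FE/Fp1.
split; first by move/FE; apply: Fp0.
by move=> s t /FE Fs /FE Ft; apply/FE; apply: FpM.
Qed.

Lemma F_denom : denom F /\ ass_l F = C /\ ass_r F = C.
Proof.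
split; last split.
- split; split; [split; first exact: F_mc | | split; first exact: F_mc | ].
  + move=> r s /FE Fs; have [s' [r' [Fs' H]]] := ore_l r Fs.
    by exists s', r'; split => //; apply/FE.
  + move=> r s /FE Fs rs; have [t [Ft Ht]] := T3 (T2 Fs rs).
    by exists t; split => //; apply/FE.
  + move=> r s /FE Fs; have [s' [r' [Fs' H]]] := ore_r r Fs.
    by exists s', r'; split => //; apply/FE.
  + move=> r s /FE Fs sr; have [t [Ft Ht]] := T4 (T1 Fs sr).
    by exists t; split => //; apply/FE.
- apply: seteqE => x; split.
    by move=> [s [/FE Fs H]]; apply/CE; exact: T1 Fs H.
  by move=> /CE bx; have [t [Ft Ht]] := T3 bx; exists t; split => //; apply/FE.
- apply: seteqE => x; split.
    by move=> [s [/FE Fs H]]; apply/CE; exact: T2 Fs H.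
  by move=> /CE bx; have [t [Ft Ht]] := T4 bx; exists t; split => //; apply/FE.
Qed.

Lemma A_units : A = @unitsS R.
Proof.
apply: seteqE => s; split.
  move=> [g H1 H2].
  have gl : forall a u v, g (a *: u + v) = a *: g u + g v.
    move=> a u v; apply: (can_inj H1).
    by rewrite elin !H2.
  by exists (Endo gl); split; apply: endo_ext => v; rewrite mulE oneE /= ?H1 ?H2.
move=> [g [H1 H2]]; exists g => v.
  by have := congr1 (fun f : R => f v) H2.
by have := congr1 (fun f : R => f v) H1.
Qed.

Lemma ideal_R (I : set R) : gIdeal I -> ~ I 1 -> I = [set 0] \/ I = C.
Proof. exact: (ideal_classif he). Qed.

Lemma maxl0 S : left_denom S -> ass_l S = [set 0] -> S `<=` A.
Proof.
move=> [_ Den] HS s Ss; rewrite A_units; apply: (bij_of he).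
  by move=> r sr; have H : ass_l S r by [exists s]; rewrite HS in H.
move=> r rs; have [t [St Ht]] := Den r s Ss rs.
by have H : ass_l S r by [exists t]; rewrite HS in H.
Qed.

Lemma maxr0 S : right_denom S -> ass_r S = [set 0] -> S `<=` A.
Proof.
move=> [_ Den] HS s Ss; rewrite A_units; apply: (bij_of he).
  move=> r sr; have [t [St Ht]] := Den r s Ss sr.
  by have H : ass_r S r by [exists t]; rewrite HS in H.
by move=> r rs; have H : ass_r S r by [exists s]; rewrite HS in H.
Qed.

Lemma maxlC S : left_denom S -> ass_l S = C -> S `<=` F.
Proof.
move=> [_ Den] HS s Ss; apply/FE; apply: fred_of.
  by move=> r sr; apply/CE; rewrite -HS; exists s.
move=> r rs; have [t [St Ht]] := Den r s Ss rs.
by apply/CE; rewrite -HS; exists t.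
Qed.

Lemma maxrC S : right_denom S -> ass_r S = C -> S `<=` F.
Proof.
move=> [_ Den] HS s Ss; apply/FE; apply: fred_of.
  move=> r sr; have [t [St Ht]] := Den r s Ss sr.
  by apply/CE; rewrite -HS; exists t.
by move=> r rs; apply/CE; rewrite -HS; exists s.
Qed.

Lemma unitA s : A s -> is_unit_in s.
Proof. by rewrite A_units => -[g [H1 H2]]; exists g. Qed.

Lemma unitF (T : pzRingType) (pi : {rmorphism R -> T}) :
  [set r | pi r = 0] = C -> forall s, F s -> is_unit_in (pi s).
Proof.
move=> Hker s /FE [ks cs]; have [g [H1 H2]] := parametrix ks cs.
have k1 : pi (1 - s * g) = 0.
  by have H : C (1 - s * g) by [apply/CE]; rewrite -Hker in H.
have k2 : pi (1 - g * s) = 0.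
  by have H : C (1 - g * s) by [apply/CE]; rewrite -Hker in H.
exists (pi g); split.
  by apply/eqP; rewrite -subr_eq0 -opprB oppr_eq0 -rmorphM -(rmorph1 pi) -rmorphB k2.
by apply/eqP; rewrite -subr_eq0 -opprB oppr_eq0 -rmorphM -(rmorph1 pi) -rmorphB k1.
Qed.

Lemma seteqT (T0 : Type) (X Y : set T0) : (forall x, X x <-> Y x) -> X = Y.
Proof. by move=> H; apply/funext => x; apply/propext; exact: H. Qed.

Local Notation zero := [set (0 : R)].

Lemma part1 : (@Ass_l R = [set a | a = zero \/ a = C] /\
   @Ass_r R = [set a | a = zero \/ a = C] /\
   @Ass R = [set a | a = zero \/ a = C]).
Proof.
have [D1 [Hl1 Hr1]] := one_denom one_neq0.
have [DF [FL FR]] := F_denom.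
split; last split; apply: seteqT => a; split.
- by move=> [S [LD <-]]; have [Id n1] := assl_ideal LD; exact: ideal_R Id n1.
- by move=> [->|->]; [exists [set 1]; split => //; exact: D1.1 | exists F; split => //; exact: DF.1].
- by move=> [S [LD <-]]; have [Id n1] := assr_ideal LD; exact: ideal_R Id n1.
- by move=> [->|->]; [exists [set 1]; split => //; exact: D1.2 | exists F; split => //; exact: DF.2].
- by move=> [S [LD <-]]; have [Id n1] := assl_ideal LD.1; exact: ideal_R Id n1.
- by move=> [->|->]; [exists [set 1]; split => // | exists F; split => //].
Qed.

Lemma part2 : is_S_l zero A /\ is_S_r zero A /\ is_S zero A /\
   is_Q_l zero (id_rmorph R) /\ is_Q_r zero (id_rmorph R) /\ is_Q zero (id_rmorph R).
Proof.
have [DA [Al Ar]] := units_denom one_neq0.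
rewrite -A_units in DA Al Ar.
split; last split; last split; last split; last split.
- by split; [exact: DA.1 | split => // S' LD HS; exact: maxl0].
- by split; [exact: DA.2 | split => // S' LD HS; exact: maxr0].
- by split => //; split => // S' D HS; exact: maxl0 D.1 HS.
- move=> S [LD [HS _]]; split; last split.
  + by move=> s Ss; apply: unitA; exact: maxl0 LD HS _ Ss.
  + by rewrite HS.
  + by move=> q; exists 1, q; split; [exact: LD.1.1.1 | rewrite /= mul1r].
- move=> S [LD [HS _]]; split; last split.
  + by move=> s Ss; apply: unitA; exact: maxr0 LD HS _ Ss.
  + by rewrite HS.
  + by move=> q; exists 1, q; split; [exact: LD.1.1.1 | rewrite /= mulr1].
- move=> S [D [HS _]]; have HS' : ass_l S = zero by [].
  have HSr : ass_r S = zero by rewrite ass_lr.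
  split; split; last split; try split.
  + by move=> s Ss; apply: unitA; exact: maxl0 D.1 HS' _ Ss.
  + by rewrite HS'.
  + by move=> q; exists 1, q; split; [exact: D.1.1.1.1 | rewrite /= mul1r].
  + by move=> s Ss; apply: unitA; exact: maxl0 D.1 HS' _ Ss.
  + by rewrite HSr.
  + by move=> q; exists 1, q; split; [exact: D.1.1.1.1 | rewrite /= mulr1].
Qed.

Lemma part3 : is_S_l C F /\ is_S_r C F /\ is_S C F /\
   forall (T : pzRingType) (pi : {rmorphism R -> T}),
     (forall t : T, exists r : R, pi r = t) -> [set r | pi r = 0] = C ->
     is_Q_l C pi /\ is_Q_r C pi /\ is_Q C pi.
Proof.
have [DF [FL FR]] := F_denom.
split; last split; last split.
- by split; [exact: DF.1 | split => // S' LD HS; exact: maxlC].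
- by split; [exact: DF.2 | split => // S' LD HS; exact: maxrC].
- by split => //; split => // S' D HS; exact: maxlC D.1 HS.
move=> T pi surj Hker; split; last split.
- move=> S [LD [HS _]]; split; last split.
  + by move=> s Ss; apply: (unitF Hker); exact: maxlC LD HS _ Ss.
  + by rewrite HS.
  + by move=> q; have [r <-] := surj q; exists 1, r; split; [exact: LD.1.1.1 | rewrite rmorph1 mul1r].
- move=> S [LD [HS _]]; split; last split.
  + by move=> s Ss; apply: (unitF Hker); exact: maxrC LD HS _ Ss.
  + by rewrite HS.
  + by move=> q; have [r <-] := surj q; exists 1, r; split; [exact: LD.1.1.1 | rewrite rmorph1 mulr1].
- move=> S [D [HS _]]; have HS' : ass_l S = C by [].
  have HSr : ass_r S = C by rewrite ass_lr.
  split; split; last split; try split.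
  + by move=> s Ss; apply: (unitF Hker); exact: maxlC D.1 HS' _ Ss.
  + by rewrite HS'.
  + by move=> q; have [r <-] := surj q; exists 1, r; split; [exact: D.1.1.1.1 | rewrite rmorph1 mul1r].
  + by move=> s Ss; apply: (unitF Hker); exact: maxlC D.1 HS' _ Ss.
  + by rewrite HSr.
  + by move=> q; have [r <-] := surj q; exists 1, r; split; [exact: D.1.1.1.1 | rewrite rmorph1 mulr1].
Qed.

Lemma maxE (X : set (set R)) : X = [set a | a = zero \/ a = C] -> maximal_elements X = [set C].
Proof.
move=> ->; apply: seteqT => a; split.
  move=> [[->|->] Hm] //; have := Hm C (or_intror erefl) zero_subC.
  by move/C_neq0.
move=> ->; split; first by right.
move=> b [->|->] // HC; exfalso; apply: C_neq0.
by apply: seteqT => x; split; [apply: HC | apply: zero_subC].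
Qed.

Lemma part4 : @maxAss_l R = [set C] /\ @maxAss_r R = [set C] /\ @maxAss R = [set C].
Proof.
have [H1 [H2 H3]] := part1.
by split; last split; apply: maxE.
Qed.

Section Quot.
Variables (T : pzRingType) (pi : {rmorphism R -> T}).
Hypothesis surj : forall t : T, exists r : R, pi r = t.
Hypothesis Hker : [set r | pi r = 0] = C.

Lemma kerC r : pi r = 0 <-> bnd he r.
Proof. rewrite -CE -Hker; done. Qed.

Lemma T1ne0 : (1 : T) != 0.
Proof.
apply/eqP => H; apply: (@not_bnd1 _ _ _ he); apply/kerC.
by rewrite rmorph1.
Qed.

Lemma T_ideal (J : set T) : gIdeal J -> ~ J 1 -> J = [set 0].
Proof.
move=> [J0 [JD [JMl JMr]]] n1.
have HI : gIdeal [set r : R | J (pi r)].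
  split; first by rewrite /= rmorph0.
  split; first by move=> x y Hx Hy; rewrite /= rmorphD; apply: JD.
  split; first by move=> a x Hx; rewrite /= rmorphM; apply: JMl.
  by move=> x a Hx; rewrite /= rmorphM; apply: JMr.
have n1' : ~ [set r : R | J (pi r)] 1 by rewrite /= rmorph1.
have sub : forall r, J (pi r) -> pi r = 0.
  move=> r Jr; apply/kerC; apply/CE.
  by have [H|H] := ideal_R HI n1'; [apply: zero_subC | ]; rewrite -H.
apply: seteqE => y; split; last by move=> ->.
by move=> Jy; have [r Hr] := surj y; rewrite -Hr; apply: sub; rewrite Hr.
Qed.

Lemma AssT : @Ass_l T = [set [set 0]] /\ @Ass_r T = [set [set 0]] /\ @Ass T = [set [set 0]].
Proof.
have [D1 [Hl1 Hr1]] := one_denom T1ne0.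
split; last split; apply: seteqT => a; split.
- by move=> [S [LD <-]]; have [Id n1] := assl_ideal LD; exact: T_ideal Id n1.
- by move=> ->; exists [set 1]; split => //; exact: D1.1.
- by move=> [S [LD <-]]; have [Id n1] := assr_ideal LD; exact: T_ideal Id n1.
- by move=> ->; exists [set 1]; split => //; exact: D1.2.
- by move=> [S [LD <-]]; have [Id n1] := assl_ideal LD.1; exact: T_ideal Id n1.
- by move=> ->; exists [set 1]; split.
Qed.

Lemma unitT (S : set T) : (forall s0 r, S (pi s0) -> pi s0 * pi r = 0 -> pi r = 0) ->
  (forall s0 r, S (pi s0) -> pi r * pi s0 = 0 -> pi r = 0) -> forall s, S s -> is_unit_in s.
Proof.
move=> H1 H2 s Ss; have [s0 Hs0] := surj s; rewrite -Hs0 in Ss *.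
apply: (unitF Hker); apply/FE; apply: fred_of.
  by move=> r sr; apply/kerC; apply: (H1 s0) => //; rewrite -rmorphM sr rmorph0.
by move=> r rs; apply/kerC; apply: (H2 s0) => //; rewrite -rmorphM rs rmorph0.
Qed.

Lemma unitT_l (S : set T) : left_denom S -> ass_l S = [set 0] -> forall s, S s -> is_unit_in s.
Proof.
move=> [_ Den] HS; apply: unitT.
  by move=> s0 r Ss H; have H0 : ass_l S (pi r) by [exists (pi s0)]; rewrite HS in H0.
move=> s0 r Ss H; have [t [St Ht]] := Den _ _ Ss H.
by have H0 : ass_l S (pi r) by [exists t]; rewrite HS in H0.
Qed.

Lemma unitT_r (S : set T) : right_denom S -> ass_r S = [set 0] -> forall s, S s -> is_unit_in s.
Proof.
move=> [_ Den] HS; apply: unitT.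
  move=> s0 r Ss H; have [t [St Ht]] := Den _ _ Ss H.
  by have H0 : ass_r S (pi r) by [exists t]; rewrite HS in H0.
by move=> s0 r Ss H; have H0 : ass_r S (pi r) by [exists (pi s0)]; rewrite HS in H0.
Qed.

Lemma part5 : loc_maximal T /\ left_loc_maximal T /\ right_loc_maximal T.
Proof.
have [AL [AR AA]] := AssT.
split; last split; split => //.
- move=> S [D [HS _]]; have HS' : ass_l S = [set 0] by [].
  have HSr : ass_r S = [set 0] by rewrite ass_lr.
  split; split; last split; try split.
  + exact: unitT_l D.1 HS'.
  + by rewrite HS'.
  + by move=> q; exists 1, q; split; [exact: D.1.1.1.1 | rewrite /= mul1r].
  + exact: unitT_l D.1 HS'.
  + by rewrite HSr.
  + by move=> q; exists 1, q; split; [exact: D.1.1.1.1 | rewrite /= mulr1].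
- move=> S [LD [HS _]]; split; last split.
  + exact: unitT_l LD HS.
  + by rewrite HS.
  + by move=> q; exists 1, q; split; [exact: LD.1.1.1 | rewrite /= mul1r].
- move=> S [LD [HS _]]; split; last split.
  + exact: unitT_r LD HS.
  + by rewrite HS.
  + by move=> q; exists 1, q; split; [exact: LD.1.1.1 | rewrite /= mulr1].
Qed.
End Quot.

End Main.

Unset Implicit Arguments.

Theorem theorem5p2 (K : fieldType) (V : lmodType K) (e : nat -> V)
    (he : is_nat_basis e) :
  let R := endo V in
  let C := @finrank K V in
  let F := @fredholm K V in
  let A := @aut K V in
  let zero := [set (0 : R)] in
  (* (1) *)
  (@Ass_l R = [set a | a = zero \/ a = C] /\
   @Ass_r R = [set a | a = zero \/ a = C] /\
   @Ass R = [set a | a = zero \/ a = C]) /\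
  (* (2) *)
  (is_S_l zero A /\ is_S_r zero A /\ is_S zero A /\
   is_Q_l zero (id_rmorph R) /\ is_Q_r zero (id_rmorph R) /\
   is_Q zero (id_rmorph R)) /\
  (* (3) : any surjective ring map pi : R -> T with kernel C realizes R/C *)
  (is_S_l C F /\ is_S_r C F /\ is_S C F /\
   forall (T : pzRingType) (pi : {rmorphism R -> T}),
     (forall t : T, exists r : R, pi r = t) -> [set r | pi r = 0] = C ->
     is_Q_l C pi /\ is_Q_r C pi /\ is_Q C pi) /\
  (* (4) *)
  (@maxAss_l R = [set C] /\ @maxAss_r R = [set C] /\ @maxAss R = [set C]) /\
  (* (5) *)
  (forall (T : pzRingType) (pi : {rmorphism R -> T}),
     (forall t : T, exists r : R, pi r = t) -> [set r | pi r = 0] = C ->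
     loc_maximal T /\ left_loc_maximal T /\ right_loc_maximal T).
Proof.
Proof.
move=> R C F A zero.
split; first exact: (part1 he).
split; first exact: (part2 he).
split; first exact: (part3 he).
split; first exact: (part4 he).
by move=> T pi surj Hker; exact: (part5 he surj Hker).
Qed.
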